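(* For every integer $n\ge2$, $$F_{n-2}=\sum_{(a_1,\dots,a_k)\in C(n)}\Bigl\lfloor\frac{a_1-1}{2}\Bigr\rfloor\cdots\Bigl\lfloor\frac{a_k-1}{2}\Bigr\rfloor.$$
   Context: $C(n)$ is the set of all compositions $(a_1,\dots,a_k)$ of $n$ (sequences of positive integers with sum $n$, any number of parts). Fibonacci numbers: $F_0=0$, $F_1=1$, $F_n=F_{n-1}+F_{n-2}$. *)

(* Defs.v *)
From mathcomp Require Import all_boot.
Set Implicit Arguments. Unset Strict Implicit. Unset Printing Implicit Defensive.

Fixpoint fib (n : nat) : nat :=
  match n with
  | 0 => 0
  | 1 => 1
  | (m.+1 as k).+1 => fib k + fib m
  end.

Definition is_composition (n : nat) (s : seq nat) : bool :=
  all (fun a => 0 < a) s && (sumn s == n).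

Fixpoint seqs_len (m k : nat) : seq (seq nat) :=
  match k with
  | 0 => [:: [::]]
  | k'.+1 => [seq a :: t | a <- iota 0 m, t <- seqs_len m k']
  end.

(* C(n): all compositions of n, listed without repetition.  Every composition
   of n has at most n parts, each at most n, so it appears in this candidate
   list exactly once. *)
Definition compositions (n : nat) : seq (seq nat) :=
  [seq s <- flatten [seq seqs_len n.+1 k | k <- iota 0 n.+1] | is_composition n s].

(* Main.v *)
Require Import Defs.
From mathcomp Require Import all_boot.
From mathcomp Require Import zify.

Definition w (a : nat) := (a - 1) %/ 2.
Definition T (n : nat) := if n == 0 then 1 else fib (n - 2).

Lemma sumT m : \sum_(j < m.+2) T j = fib m.+1.
Proof.
elim: m => [|m IH]; first by rewrite !big_ord_recr big_ord0.
rewrite big_ord_recr IH /T /=.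
by rewrite -addn2 addnK addnC.
Qed.

Lemma w3 a : w a.+3 = (w a.+1).+1.
Proof. rewrite /w !subSS !subn0 -addn2 divnDr ?dvdnn // divnn addn1 //. Qed.

Lemma sumS n (F : nat -> nat) : \sum_(a < n.+1) F a = F 0 + \sum_(a < n) F a.+1.
Proof. by rewrite big_ord_recl. Qed.

Lemma Rid n : 0 < n -> \sum_(a < n.+1) w a * T (n - a) = T n.
Proof.
elim/ltn_ind: n => n IH n0.
case: n n0 IH => [//|[|[|[|k]]]] _ IH.
- by rewrite !big_ord_recr big_ord0.
- by rewrite !big_ord_recr big_ord0.
- by rewrite !big_ord_recr big_ord0.
rewrite (sumS k.+4 (fun a => w a * T (k.+4 - a))) (sumS k.+3 (fun a => w a.+1 * T (k.+4 - a.+1))) (sumS k.+2 (fun a => w a.+2 * T (k.+4 - a.+2))) [w 0]/w [w 1]/w [w 2]/w /= !add0n.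
under eq_bigr => i _ do rewrite !subSS w3 mulSn.
rewrite big_split /=.
have H2 := IH k.+2 (ltnW (ltnSn _)) isT.
rewrite (sumS k.+2 (fun a => w a * T (k.+2 - a))) [w 0]/w /= add0n in H2.
have H3 : \sum_(i < k.+2) w i.+1 * T (k.+1 - i) = T k.+2.
  by rewrite -H2; apply: eq_bigr => i _; rewrite subSS.
rewrite H3.
rewrite (reindex_inj rev_ord_inj) /=.
have -> : \sum_(j < k.+2) T (k.+1 - rev_ord j) = \sum_(j < k.+2) T j.
  apply: eq_bigr => j _; rewrite /= subSS; congr T.
  have := ltn_ord j; lia.
rewrite sumT /T /=.
rewrite !subn2 /=. case: k {IH H2 H3} => [//|k] /=. by rewrite addnC.
Qed.

Definition W m k n := \sum_(s <- seqs_len m k | is_composition n s) \prod_(x <- s) w x.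

Lemma W0 m n : W m 0 n = (n == 0).
Proof. rewrite /W big_cons big_nil /is_composition /= big_nil. by case: n. Qed.

Lemma isc_cons n a t : 0 < a <= n -> is_composition n (a :: t) = is_composition (n - a) t.
Proof.
move=> /andP [a0 an]; rewrite /is_composition /= a0 /=; congr andb.
apply/eqP/eqP; lia.
Qed.

Lemma W_S m k n : W m k.+1 n = \sum_(0 <= a < m | a <= n) w a * W m k (n - a).
Proof.
rewrite /W /= big_flatten /= big_map [RHS]big_mkcond /=.
have -> : iota 0 m = index_iota 0 m by rewrite /index_iota subn0.
apply: eq_bigr => a _; rewrite big_map.
case: (posnP a) => [->|a0].
  have w0 : w 0 = 0 by [].
  rewrite w0 mul0n; apply: big1 => s _; by rewrite big_cons w0 mul0n.
case: (leqP a n) => an.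
  rewrite big_distrr /=; apply: eq_big => s.
    by rewrite isc_cons // a0 an.
  by move=> _; rewrite big_cons.
apply: big1 => s; rewrite /is_composition /=.
move=> /andP [_ /eqP]; lia.
Qed.

Lemma Wvan m k n : n < k -> W m k n = 0.
Proof.
elim: k n => [//|k IH] n nk.
rewrite W_S; apply: big1 => a an.
case: (posnP a) => [->|a0]; first by rewrite /w mul0n.
by rewrite IH ?muln0 //; lia.
Qed.

Definition S m n := \sum_(0 <= k < m) W m k n.

Lemma Smain m n : n < m -> S m n = T n.
Proof.
elim/ltn_ind: n m => n IH m nm.
case: m nm => [//|m'] nm.
rewrite /S big_mkord big_ord_recl W0.
case: (posnP n) => [n0|n0].
  rewrite n0 /= big1 // => i _; apply: Wvan => //.
rewrite add0n.
under eq_bigr => i _ do rewrite W_S.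
rewrite exchange_big /=.
have -> : \sum_(0 <= a < m'.+1 | a <= n) \sum_(i < m') w a * W m'.+1 i (n - a)
    = \sum_(0 <= a < m'.+1 | a <= n) w a * T (n - a).
  apply: eq_bigr => a an; rewrite -big_distrr /=.
  case: (posnP a) => [->|a0]; first by rewrite /w !mul0n.
  congr muln.
  rewrite -(IH (n - a) _ m'.+1); last by lia.
    rewrite /S big_mkord big_ord_recr /= Wvan ?addn0 //; lia.
  lia.
rewrite -(Rid n n0) -(big_mkord xpredT (fun a => w a * T (n - a))) (big_nat_widen _ _ _ _ _ nm).
by apply: eq_bigl => a; rewrite ltnS.
Qed.

Theorem mainTheorem15 (n : nat) : 2 <= n ->
  fib (n - 2) = \sum_(s <- compositions n) \prod_(a <- s) ((a - 1) %/ 2).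
Proof.
move=> n2.
have := @Smain n.+1 n (ltnSn n).
rewrite /S /T; case: eqP => [n0|_]; first by subst n.
move=> <-; rewrite /compositions big_filter big_flatten big_map.
have -> : iota 0 n.+1 = index_iota 0 n.+1 by rewrite /index_iota subn0.
by [].
Qed.
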